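(* For every $n\ge 1$, the sequence $\Lambda_n$ (defined in the context) contains every chain of the Greene–Kleitman symmetric chain decomposition of $Q_n$ exactly once.
   Context: Let $D$ be the set of all bitstrings (including the empty string $\varepsilon$) with equally many $0$s and $1$s such that every prefix contains at least as many $0$s as $1$s. The chains of the Greene–Kleitman symmetric chain decomposition of the hypercube $Q_n$ are exactly the paths encoded by strings of length $n$ over $\{0,1,*\}$ of the form $u_0*u_1*\cdots*u_{h-1}*u_h$ with $u_0,\ldots,u_h\in D$ (any $h\ge 0$); the vertices of such a chain are obtained by replacing the $*$s by $i$ ones followed by $h-i$ zeros, $i=0,\ldots,h$. The length $|C|$ of a chain $C$ is its number of $*$s. For a string $C$ over $\{0,1,*\}$ with at least two $*$s, $f(C)$ (resp. $\ell(C)$) is obtained by replacing the first two (resp. last two) $*$s by $0$ and $1$, respectively. For a sequence $\Gamma$, $\Gamma^R$ is its reversal. Define $\Lambda_0:=\varepsilon$ (the sequence with the single empty chain) and $\Lambda_1:=*$. For $n\ge 0$ and $\Lambda_n=C_1,\ldots,C_N$ set $\Lambda_{n+2}:=\rho(C_1),\ldots,\rho(C_N)$, where $\rho(C):=\lambda(C)$ if $|C|\equiv n\pmod 4$ and $\rho(C):=\lambda(C)^R$ otherwise, and for even $n$: $\lambda(C):=*C*,\ f( *C* ),\ f(\ell( *C* )),\ \ell( *C* )$ if $|C|\ge2$ and $\lambda(C):=*C*,\ 0C1$ if $|C|=0$; for odd $n$: $\lambda(C):=*C*,\ \ell( *C* ),\ \ell(f( *C* )),\ f( *C* )$ if $|C|\ge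 3$ and $\lambda(C):=*C*,\ \ell( *C* ),\ f( *C* )$ if $|C|=1$. *)

(* Defs.v *)
From mathcomp Require Import all_boot.
Set Implicit Arguments. Unset Strict Implicit. Unset Printing Implicit Defensive.

(* Symbols of the alphabet {0,1,*}: Some false = 0, Some true = 1, None = *. *)
Definition sym := option bool.
Definition s0 : sym := Some false.
Definition s1 : sym := Some true.
Definition star : sym := None.

(* Strings over {0,1,*}; a chain of Q_n is encoded by such a string. *)
Definition chain := seq sym.

Definition dyck (u : chain) : Prop :=
  all (fun x => x != star) u /\
  count_mem s0 u = count_mem s1 u /\
  (forall k, count_mem s1 (take k u) <= count_mem s0 (take k u)).

Fixpoint join_star (us : seq chain) : chain :=
  match us with
  | [::] => [::]
  | [:: u] => u
  | u :: us' => u ++ star :: join_star us'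
  end.

Definition GK_chain (n : nat) (C : chain) : Prop :=
  size C = n /\
  exists us : seq chain, us != [::] /\ (forall u, u \in us -> dyck u) /\
                         C = join_star us.

Definition len (C : chain) : nat := count_mem star C.

Fixpoint repl_first (b : sym) (C : chain) : chain :=
  match C with
  | [::] => [::]
  | x :: C' => if x == star then b :: C' else x :: repl_first b C'
  end.

(* f: first two stars -> 0 and 1 ; ell: last two stars -> 0 and 1 *)
Definition fC (C : chain) : chain := repl_first s1 (repl_first s0 C).
Definition ellC (C : chain) : chain := rev (repl_first s0 (repl_first s1 (rev C))).

Definition wrap (C : chain) : chain := star :: rcons C star.

Definition lam (n : nat) (C : chain) : seq chain :=
  let W := wrap C in
  if ~~ odd n then
    (if 2 <= len C then [:: W; fC W; fC (ellC W); ellC W]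
     else [:: W; s0 :: rcons C s1])
  else
    (if 3 <= len C then [:: W; ellC W; ellC (fC W); fC W]
     else [:: W; ellC W; fC W]).

Definition rho (n : nat) (C : chain) : seq chain :=
  if len C %% 4 == n %% 4 then lam n C else rev (lam n C).

Fixpoint Lambda (n : nat) : seq chain :=
  match n with
  | 0 => [:: [::]]
  | 1 => [:: [:: star]]
  | m.+2 => flatten (map (rho m) (Lambda m))
  end.

(* Main.v *)
Require Import Defs.
From mathcomp Require Import all_boot zify.
Set Implicit Arguments. Unset Strict Implicit. Unset Printing Implicit Defensive.
Local Notation wrap := Defs.wrap.

Fixpoint ht (h : nat) (s : chain) : option nat :=
  match s with
  | [::] => Some h
  | x :: s' => match x with
     | Some false => ht h.+1 s'
     | Some true => if h is h'.+1 then ht h' s' else None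
     | None => if h is 0 then ht 0 s' else None
     end
  end.

Lemma ht_cat h s t : ht h (s ++ t) = obind (fun h' => ht h' t) (ht h s).
Proof. by elim: s h => [|x s IH] h //=; case: x => [[]|]; case: h => [|h] /=; rewrite ?IH. Qed.

Definition swap (x : sym) : sym := if x is Some b then Some (~~ b) else None.
Definition sg (s : chain) : chain := rev (map swap s).
Lemma swapK : involutive swap. Proof. by case=> [[]|]. Qed.
Lemma sg_cons x s : sg (x :: s) = rcons (sg s) (swap x). Proof. by rewrite /sg /= rev_cons. Qed.
Lemma sg_rcons s x : sg (rcons s x) = swap x :: sg s. Proof. by rewrite /sg map_rcons rev_rcons. Qed.
Lemma sg_cat s t : sg (s ++ t) = sg t ++ sg s. Proof. by rewrite /sg map_cat rev_cat. Qed.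
Lemma sgK : involutive sg. Proof. by move=> s; rewrite /sg map_rev revK (mapK swapK). Qed.
Lemma size_sg s : size (sg s) = size s. Proof. by rewrite size_rev size_map. Qed.
Lemma len_sg s : len (sg s) = len s.
Proof. rewrite /len /sg count_rev count_map; apply: eq_count => -[[]|] //. Qed.
Lemma mem_len s : (star \in s) = (0 < len s).
Proof. by rewrite /len -has_pred1 has_count. Qed.
Lemma mem_sg s : (star \in sg s) = (star \in s). Proof. by rewrite !mem_len len_sg. Qed.
Lemma sg_wrap C : sg (wrap C) = wrap (sg C). Proof. by rewrite /wrap sg_cons sg_rcons. Qed.

Lemma ht_sg h h' s : ht h s = Some h' -> ht h' (sg s) = Some h.
Proof.
elim: s h => [|x s IH] h /=; first by case=> ->.
rewrite sg_cons -cats1 ht_cat; case: x => [[]|] /=.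
- by case: h => [|h] // /IH ->.
- by move/IH ->.
- by case: h => // /IH ->.
Qed.
Lemma valid_sg s : ht 0 s = Some 0 -> ht 0 (sg s) = Some 0. Proof. exact: ht_sg. Qed.

Lemma shift s h h' k : star \notin s -> ht h s = Some h' -> ht (h + k) s = Some (h' + k).
Proof.
elim: s h => [|x s IH] h /=; first by move=> _ [->].
rewrite in_cons negb_or => /andP [nx ns]; move: IH => /(_ _ ns) IH.
case: x nx => [[]|] //= _.
- by case: h => [|h] //= /IH.
- by move/IH; rewrite addSn.
Qed.

Lemma len_cons x s : len (x :: s) = (x == star) + len s. Proof. by []. Qed.
Lemma len_cat s t : len (s ++ t) = len s + len t. Proof. exact: count_cat. Qed.
Lemma len_rcons s x : len (rcons s x) = len s + (x == star).
Proof. by rewrite -cats1 len_cat /= addn0. Qed.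
Lemma len0 s : star \notin s -> len s = 0. Proof. by move/count_memPn. Qed.

Lemma par h h' s : ht h s = Some h' -> odd (h' + len s) = odd (h + size s).
Proof.
elim: s h => [|x s IH] h; first by case=> <-; rewrite /len /= addn0.
rewrite len_cons /=; case: x => [[]|] /=.
- by case: h => // h /IH; rewrite add0n addSn addnS /= negbK.
- by move/IH; rewrite add0n addnS -addSn.
- by case: h => // /IH; rewrite add1n addnS /= => ->.
Qed.
Lemma parity C : ht 0 C = Some 0 -> odd (len C) = odd (size C).
Proof. by move/par. Qed.

Lemma FR M : forall h h', ht h.+1 M = Some h' -> h' <= h ->
  exists a t, [/\ M = a ++ s1 :: t, star \notin a, ht 0 a = Some 0 & ht h t = Some h'].
Proof.
have [N] := ubnP (size M); elim: N M => // N IHN [|x M] /= szM h h'.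
  by case=> <-; rewrite ltnn.
case: x => [[]|] //=.
- by move=> H _; exists [::], M.
- move=> H le.
  have [a1 [t1 [E1 n1 h1 h1']]] := IHN M szM h.+1 h' H (leqW le).
  have szt : size t1 < N by move: szM; rewrite E1 size_cat /=; lia.
  have [a2 [t2 [E2 n2 h2 h2']]] := IHN t1 szt h h' h1' le.
  exists (s0 :: a1 ++ s1 :: a2), t2; split.
  + by rewrite E1 E2 /= -catA.
  + by rewrite !(in_cons, mem_cat) (negbTE n1) (negbTE n2).
  + by rewrite /= ht_cat (shift 1 n1 h1) /=.
  + exact: h2'.
Qed.

Fixpoint mt (h : nat) (s : chain) : chain :=
  match s with
  | [::] => [::]
  | x :: s' => match x with
     | Some false => x :: mt h.+1 s'
     | Some true => if h is h'.+1 then x :: mt h' s' else star :: s'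
     | None => x :: mt h s'
     end
  end.

Lemma mt_cat h h' a s : ht h a = Some h' -> mt h (a ++ s) = a ++ mt h' s.
Proof.
elim: a h => [|x a IH] h /=; first by case=> ->.
case: x => [[]|] /=.
- by case: h => // h /IH ->.
- by move/IH ->.
- by case: h => // /IH ->.
Qed.

Definition unF (s : chain) : chain := if s is Some false :: s' then star :: mt 0 s' else s.
Lemma unF_fr a b : ht 0 a = Some 0 -> unF (s0 :: a ++ s1 :: b) = star :: a ++ star :: b.
Proof. by move=> H; rewrite /= (mt_cat _ H). Qed.

Lemma rf_nostar b x y : star \notin x -> repl_first b (x ++ y) = x ++ repl_first b y.
Proof.
elim: x => //= z x IH; rewrite in_cons negb_or => /andP [nz /IH ->].
by rewrite eq_sym (negbTE nz).
Qed.
Lemma rf_star b x y : star \in x -> repl_first b (x ++ y) = repl_first b x ++ y.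
Proof.
elim: x => //= z x IH; rewrite in_cons; case: ifP => //= Hz.
by rewrite eq_sym Hz /= => /IH ->.
Qed.
Lemma split_star s : star \in s -> exists a r, s = a ++ star :: r /\ star \notin a.
Proof.
elim: s => //= x s IH; rewrite in_cons.
case: (eqVneq star x) => [<- _|nx /= /IH [a [r [-> na]]]]; first by exists [::], s.
by exists (x :: a), r; rewrite in_cons negb_or nx na.
Qed.
Lemma rf_split b a r : star \notin a -> repl_first b (a ++ star :: r) = a ++ b :: r.
Proof. by move=> na; rewrite rf_nostar //= eqxx. Qed.
Lemma rf_none b x : star \notin x -> repl_first b x = x.
Proof. by move=> H; have := rf_nostar b [::] H; rewrite !cats0. Qed.
Lemma size_rf b s : size (repl_first b s) = size s.
Proof. by elim: s => //= x s IH; case: ifP => //= _; rewrite IH. Qed.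
Lemma len_rf b s : b != star -> star \in s -> len (repl_first b s) = (len s).-1.
Proof.
move=> nb /split_star [a [r [-> na]]]; rewrite rf_split // !len_cat !len_cons.
by rewrite (negbTE nb) eqxx len0.
Qed.
Lemma rf_rcons b Z y : y != star -> repl_first b (rcons Z y) = rcons (repl_first b Z) y.
Proof.
move=> ny; elim: Z => /= [|z Z IH]; first by rewrite (negbTE ny).
by case: ifP => _ //=; rewrite IH.
Qed.
Lemma map_rf b s : map swap (repl_first b s) = repl_first (swap b) (map swap s).
Proof. by elim: s => //= x s IH; case: x => [[]|] /=; rewrite ?IH. Qed.

Lemma fC_star Z : fC (star :: Z) = s0 :: repl_first s1 Z.
Proof. by []. Qed.
Lemma ellC_sg X : ellC X = sg (fC (sg X)).
Proof.
rewrite /ellC /fC /sg map_rf map_rf /= map_rev (mapK swapK) //.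
Qed.
Lemma size_fC X : size (fC X) = size X. Proof. by rewrite /fC !size_rf. Qed.
Lemma size_ellC X : size (ellC X) = size X. Proof. by rewrite /ellC size_rev !size_rf size_rev. Qed.
Lemma size_wrap C : size (wrap C) = (size C).+2. Proof. by rewrite /= size_rcons. Qed.
Lemma len_wrap C : len (wrap C) = (len C).+2.
Proof. by rewrite /wrap len_cons len_rcons eqxx addn1. Qed.

Lemma fC_cat x y : 2 <= len x -> fC (x ++ y) = fC x ++ y.
Proof.
move=> H; have h1 : star \in x by rewrite mem_len; lia.
have h2 : star \in repl_first s0 x by rewrite mem_len len_rf //; lia.
by rewrite /fC rf_star // rf_star.
Qed.
Lemma ellC_cat x y : 2 <= len y -> ellC (x ++ y) = x ++ ellC y.
Proof. by move=> H; rewrite !ellC_sg sg_cat fC_cat ?len_sg // sg_cat sgK. Qed.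

Lemma comm Y : 4 <= len Y -> fC (ellC Y) = ellC (fC Y).
Proof.
move=> H.
have /split_star [a [r [E na]]] : star \in Y by rewrite mem_len; lia.
have Hr : len r = (len Y).-1 by rewrite E len_cat len_cons eqxx (len0 na); lia.
have /split_star [b [m [Er nb]]] : star \in r by rewrite mem_len; lia.
have Hm : len m = (len Y).-2 by move: Hr; rewrite Er len_cat len_cons eqxx (len0 nb); lia.
have -> : Y = (a ++ star :: b ++ [:: star]) ++ m by rewrite E Er -catA /= -catA.
have Hp : len (a ++ star :: b ++ [:: star]) = 2 by rewrite len_cat len_cons len_cat (len0 na) (len0 nb).
rewrite ellC_cat; last by lia.
rewrite (@fC_cat _ (ellC m)) ?Hp // (@fC_cat _ m) ?Hp // ellC_cat; last by lia.
by [].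
Qed.

Definition g (D : chain) := sg (unF (sg (unF D))).
Definition strip (s : chain) : chain := take (size s).-2 (behead s).
Definition pre D := strip (g D).

Lemma unF_wrap C : unF (wrap C) = wrap C. Proof. by []. Qed.
Lemma strip_wrap C : strip (wrap C) = C.
Proof. by rewrite /strip /wrap /= size_rcons /= -cats1 take_size_cat. Qed.
Lemma g_wrap C : g (wrap C) = wrap C.
Proof. by rewrite /g unF_wrap sg_wrap unF_wrap -sg_wrap sgK. Qed.
Lemma g_unF D E : unF D = E -> unF E = E -> g D = g E.
Proof. by rewrite /g => -> ->. Qed.
Lemma v_rstar C : ht 0 (rcons C star) = Some 0 <-> ht 0 C = Some 0.
Proof. by rewrite -cats1 ht_cat; case: (ht 0 C) => [[|k]|]. Qed.
Lemma v_wrap C : ht 0 C = Some 0 -> ht 0 (wrap C) = Some 0.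
Proof. by move/v_rstar. Qed.

Lemma v_fstar Z : ht 0 Z = Some 0 -> star \in Z ->
  ht 0 (fC (star :: Z)) = Some 0 /\ unF (fC (star :: Z)) = star :: Z.
Proof.
move=> H /split_star [a [r [E na]]]; subst Z.
rewrite fC_star rf_split //; move: H; rewrite ht_cat.
case Ha: (ht 0 a) => [[|k]|] //= H; split.
- by rewrite ht_cat (shift 1 na Ha) /=.
- by rewrite /= (mt_cat _ Ha).
Qed.

Lemma fW C : star \in C -> fC (wrap C) = s0 :: rcons (repl_first s1 C) star.
Proof. by move=> H; rewrite /wrap fC_star -cats1 rf_star // cats1. Qed.
Lemma eW C : star \in C -> ellC (wrap C) = star :: rcons (sg (repl_first s1 (sg C))) s1.
Proof. by move=> H; rewrite ellC_sg sg_wrap fW ?mem_sg // sg_cons sg_rcons. Qed.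
Lemma len_fW C : star \in C -> len (fC (wrap C)) = len C.
Proof.
move=> H; rewrite fW // len_cons len_rcons len_rf //; move: H; rewrite mem_len /=; lia.
Qed.
Lemma len_eW C : star \in C -> len (ellC (wrap C)) = len C.
Proof. by move=> H; rewrite ellC_sg sg_wrap len_sg len_fW ?mem_sg // len_sg. Qed.

Lemma in_rstar C : star \in rcons C star.
Proof. by rewrite mem_rcons mem_head. Qed.

Definition trip C D := [/\ ht 0 D = Some 0, size D = (size C).+2 & pre D = C].

Lemma T_W C : ht 0 C = Some 0 -> trip C (wrap C).
Proof. by move=> V; split; [exact: v_wrap | exact: size_wrap | rewrite /pre g_wrap strip_wrap]. Qed.

Lemma T_fW C : ht 0 C = Some 0 -> trip C (fC (wrap C)).
Proof.
move=> V.
have [V1 U1] := v_fstar (proj2 (v_rstar C) V) (in_rstar C).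
split => //; first by rewrite size_fC size_wrap.
by rewrite /pre (g_unF U1) // g_wrap strip_wrap.
Qed.

Lemma g_eW C : ht 0 C = Some 0 -> star \in C -> g (ellC (wrap C)) = wrap C.
Proof.
move=> V H.
have E : unF (ellC (wrap C)) = ellC (wrap C) by rewrite eW.
have V' := valid_sg V.
have [V1 U1] := v_fstar (proj2 (v_rstar _) V') (in_rstar (sg C)).
rewrite /g E {1}ellC_sg sgK sg_wrap.
by rewrite [fC _]/(fC (star :: rcons (sg C) star)) U1 -/(wrap (sg C)) sg_wrap sgK.
Qed.

Lemma T_eW C : ht 0 C = Some 0 -> star \in C -> trip C (ellC (wrap C)).
Proof.
move=> V H; have V' := valid_sg V.
have [V1 U1] := v_fstar (proj2 (v_rstar _) V') (in_rstar (sg C)).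
split; last by rewrite /pre g_eW // strip_wrap.
- by rewrite ellC_sg sg_wrap; apply: valid_sg.
- by rewrite size_ellC size_wrap.
Qed.

Lemma T_fE C : ht 0 C = Some 0 -> 1 < len C -> trip C (fC (ellC (wrap C))).
Proof.
move=> V H; have HC : star \in C by rewrite mem_len; lia.
have [VE _ _] := T_eW V HC.
have LE := len_eW HC.
move: VE LE; rewrite eW // => VE LE.
have HZ : star \in rcons (sg (repl_first s1 (sg C))) s1.
  by rewrite mem_len; move: LE; rewrite len_cons /=; lia.
have [V1 U1] := @v_fstar (rcons (sg (repl_first s1 (sg C))) s1) VE HZ.
split => //; first by rewrite size_fC -eW // size_ellC size_wrap.
by rewrite /pre (g_unF U1) // -eW // g_eW // strip_wrap.
Qed.

Lemma T_0C1 C : ht 0 C = Some 0 -> star \notin C -> trip C (s0 :: rcons C s1).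
Proof.
move=> V nC; split.
- by rewrite /= -cats1 ht_cat (shift 1 nC V).
- by rewrite /= size_rcons.
- have U : unF (s0 :: rcons C s1) = wrap C by rewrite -cats1 unF_fr // cats1.
  by rewrite /pre (g_unF U) // g_wrap strip_wrap.
Qed.

Lemma odd_pos k : odd k -> 0 < k. Proof. by case: k. Qed.
Lemma even_ge2 k : ~~ odd k -> 0 < k -> 1 < k. Proof. by case: k => [|[|k]]. Qed.
Lemma odd_ge3 k : odd k -> 1 < k -> 2 < k. Proof. by case: k => [|[|[|k]]]. Qed.

Lemma S n C D : ht 0 C = Some 0 -> odd (len C) = odd n -> D \in lam n C -> trip C D.
Proof.
move=> V P; rewrite /lam; case: ifP => Hn.
- case: ifP => H2; rewrite !inE.
  + have HC : star \in C by rewrite mem_len; lia.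
    case/or4P => /eqP ->; [exact: T_W | exact: T_fW | exact: T_fE | exact: T_eW].
  + have nC : star \notin C.
      apply/negP; rewrite mem_len => L; have := @even_ge2 (len C).
      by rewrite P Hn L H2 => /(_ isT isT).
    case/orP => /eqP ->; [exact: T_W | exact: T_0C1].
- have Po : odd (len C) by rewrite P; move: Hn; case: (odd n).
  have HC : star \in C by rewrite mem_len odd_pos.
  case: ifP => H3; rewrite !inE.
  + rewrite -comm ?len_wrap; last by lia.
    case/or4P => /eqP ->; [exact: T_W | exact: T_eW | apply: T_fE => //; lia | exact: T_fW].
  + case/or3P => /eqP ->; [exact: T_W | exact: T_eW | exact: T_fW].
Qed.

Lemma fE_form C : star \in C ->
  fC (ellC (wrap C)) = s0 :: rcons (repl_first s1 (sg (repl_first s1 (sg C)))) s1.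
Proof. by move=> H; rewrite eW // fC_star rf_rcons. Qed.

Lemma U n C : ht 0 C = Some 0 -> odd (len C) = odd n -> uniq (lam n C).
Proof.
move=> V P; rewrite /lam; case: ifP => Hn.
- case: ifP => H2.
  + have HC : star \in C by rewrite mem_len; lia.
    rewrite fE_form // fW // eW // /wrap.
    by rewrite /= ?inE ?eqseq_cons ?eqseq_rcons /= ?andbF.
    by rewrite /= ?inE ?eqseq_cons ?eqseq_rcons /= ?andbF.
- have Po : odd (len C) by rewrite P; move: Hn; case: (odd n).
  have HC : star \in C by rewrite mem_len odd_pos.
  case: ifP => H3.
  + rewrite -comm ?len_wrap; last by lia.
    rewrite fE_form // fW // eW // /wrap.
    by rewrite /= ?inE ?eqseq_cons ?eqseq_rcons /= ?andbF.
  + rewrite fW // eW // /wrap.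
    by rewrite /= ?inE ?eqseq_cons ?eqseq_rcons /= ?andbF.
Qed.

Lemma E0s M : ht 0 (s0 :: rcons M star) = Some 0 ->
  exists C, [/\ ht 0 C = Some 0, size C = size M, star \in C & s0 :: rcons M star = fC (wrap C)].
Proof.
rewrite /= -cats1 ht_cat; case HM: (ht 1 M) => [[|k]|] // _.
have [a [t [E na Ha Ht]]] := FR HM (leqnn 0).
have HC : star \in a ++ star :: t by rewrite mem_cat mem_head orbT.
exists (a ++ star :: t); split => //.
- by rewrite ht_cat Ha.
- by rewrite E !size_cat.
- by rewrite fW // rf_split // E cats1.
Qed.

Lemma Es1 M : ht 0 (star :: rcons M s1) = Some 0 ->
  exists C, [/\ ht 0 C = Some 0, size C = size M, star \in C & star :: rcons M s1 = ellC (wrap C)].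
Proof.
move=> V; have := valid_sg V; rewrite sg_cons sg_rcons /= => V'.
have [C [VC SC HC EC]] := E0s V'.
exists (sg C); split.
- exact: valid_sg.
- by rewrite size_sg SC size_sg.
- by rewrite mem_sg.
- by rewrite ellC_sg sg_wrap sgK -EC sg_cons sg_rcons sgK.
Qed.

Lemma E01 M : ht 0 (s0 :: rcons M s1) = Some 0 ->
  (star \notin M /\ ht 0 M = Some 0) \/
  exists C, [/\ ht 0 C = Some 0, size C = size M, 1 < len C & s0 :: rcons M s1 = fC (ellC (wrap C))].
Proof.
move=> /= H; have [a [t [E na Ha Ht]]] := FR H (leqnn 0).
case/lastP: t E Ht => [|t' y] E Ht.
  by left; move: E; rewrite cats1 => /rcons_inj [->].
right; move: E; rewrite -rcons_cons -rcons_cat => /rcons_inj [EM Ey]; subst M y.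
have VY : ht 0 (star :: rcons (a ++ star :: t') s1) = Some 0.
  by rewrite /= rcons_cat ht_cat Ha.
have [C [VC SC HC EC]] := Es1 VY.
exists C; split => //.
- by rewrite SC !size_cat.
- have := len_eW HC; rewrite -EC len_cons len_rcons len_cat len_cons /=; lia.
- by rewrite -EC fC_star rf_rcons // rf_split.
Qed.

Lemma v_r0 X h : ht h (rcons X s0) <> Some 0.
Proof. by rewrite -cats1 ht_cat; case: (ht h X). Qed.

Lemma W_in n C : wrap C \in lam n C.
Proof. by rewrite /lam; case: ifP => _; case: ifP => _; rewrite inE eqxx. Qed.

Lemma fW_in n C : star \in C -> odd (len C) = odd n -> fC (wrap C) \in lam n C.
Proof.
rewrite mem_len => HC P; rewrite /lam; case: ifP => Hn.
- by rewrite even_ge2 ?P // !inE eqxx orbT.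
- by case: ifP => _; rewrite !inE eqxx !orbT.
Qed.

Lemma eW_in n C : star \in C -> odd (len C) = odd n -> ellC (wrap C) \in lam n C.
Proof.
rewrite mem_len => HC P; rewrite /lam; case: ifP => Hn.
- by rewrite even_ge2 ?P // !inE eqxx !orbT.
- by case: ifP => _; rewrite !inE eqxx !orbT.
Qed.

Lemma fE_in n C : 1 < len C -> odd (len C) = odd n -> fC (ellC (wrap C)) \in lam n C.
Proof.
move=> HC P; rewrite /lam; case: ifP => Hn.
- by rewrite HC !inE eqxx !orbT.
- have Po : odd (len C) by rewrite P; move: Hn; case: (odd n).
  rewrite odd_ge3 // -comm ?len_wrap; last by lia.
  by rewrite !inE eqxx !orbT.
Qed.

Lemma C01_in n C : star \notin C -> ~~ odd n -> s0 :: rcons C s1 \in lam n C.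
Proof.
move=> nC Hn; rewrite /lam Hn len0 //=.
by rewrite !inE eqxx orbT.
Qed.

Lemma Ex n D : ht 0 D = Some 0 -> size D = n.+2 ->
  exists C, [/\ ht 0 C = Some 0, size C = n & D \in lam n C].
Proof.
case: D => [|x D'] // V S.
case/lastP: D' V S => [|M y] V S; first by move: S => /= [].
have SM : size M = n by move: S; rewrite /= size_rcons => -[].
have Pm : forall C, ht 0 C = Some 0 -> size C = n -> odd (len C) = odd n.
  by move=> C VC <-; exact: parity.
case: y S V => [[]|] S V.
- case: x S V => [[]|] S V //.
  + case: (E01 V) => [[nM VM]|[C [VC SC L EC]]].
    * exists M; split => //; change (s0 :: rcons M s1 \in lam n M); apply: C01_in => //.
      by rewrite -SM -parity // len0.
    * exists C; split => //; first by rewrite SC.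
      change (s0 :: rcons M s1 \in lam n C).
      by rewrite EC fE_in // Pm // SC.
  + have [C [VC SC HC EC]] := Es1 V.
    exists C; split => //; first (by rewrite SC); change (star :: rcons M s1 \in lam n C).
    by rewrite EC eW_in // Pm // SC.
- by exfalso; apply: (@v_r0 (x :: M) 0); rewrite rcons_cons.
- case: x S V => [[]|] S V //.
  + have [C [VC SC HC EC]] := E0s V.
    exists C; split => //; first (by rewrite SC); change (s0 :: rcons M star \in lam n C).
    by rewrite EC fW_in // Pm // SC.
  + exists M; split => //; last exact: W_in.
    exact: (proj1 (v_rstar M) V).
Qed.

Lemma all_nstar (u : chain) : all (fun x => x != star) u = (star \notin u).
Proof. by elim: u => //= x u ->; rewrite in_cons negb_or eq_sym. Qed.

Lemma c11 (s : chain) : count_mem s1 (s1 :: s) = (count_mem s1 s).+1. Proof. by []. Qed.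
Lemma c01 (s : chain) : count_mem s0 (s1 :: s) = count_mem s0 s. Proof. by []. Qed.
Lemma c10 (s : chain) : count_mem s1 (s0 :: s) = count_mem s1 s. Proof. by []. Qed.
Lemma c00 (s : chain) : count_mem s0 (s0 :: s) = (count_mem s0 s).+1. Proof. by []. Qed.
Lemma cnil (x : sym) : count_mem x ([::] : chain) = 0. Proof. by []. Qed.
Lemma tk0 (s : chain) : take 0 s = [::]. Proof. exact: take0. Qed.
Lemma tknil k : take k ([::] : chain) = [::]. Proof. by []. Qed.

Lemma ht_dyck u : forall h h', star \notin u ->
  (ht h u = Some h' <-> (h' + count_mem s1 u = h + count_mem s0 u /\
     forall k, count_mem s1 (take k u) <= h + count_mem s0 (take k u))).
Proof.
elim: u => [|x u IH] h h' nu.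
  split; first by case=> <-; split => // k; rewrite tknil !cnil.
  by case=> E _; move: E; rewrite !cnil !addn0 => ->.
move: nu; rewrite in_cons negb_or => /andP [nx nu].
case: x nx => [[]|] // _.
- change (Some true) with s1; rewrite c11 c01.
  have -> : ht h (s1 :: u) = (if h is h0.+1 then ht h0 u else None) by [].
  split.
  + case: h => [|h] // /(IH _ _ nu) [E K]; split; first by lia.
    case=> [|k]; first by rewrite tk0 !cnil.
    by rewrite take_cons c11 c01; have := K k; lia.
  + move=> [E K]; case: h E K => [|h] E K.
      by have := K 1; rewrite take_cons tk0 c11 c01 !cnil.
    apply/IH => //; split; first by lia.
    by move=> k; have := K k.+1; rewrite take_cons c11 c01; lia.
- change (Some false) with s0; rewrite c10 c00.
  have -> : ht h (s0 :: u) = ht h.+1 u by [].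
  split.
  + move/(IH _ _ nu) => [E K]; split; first by lia.
    case=> [|k]; first by rewrite tk0 !cnil.
    by rewrite take_cons c10 c00; have := K k; lia.
  + move=> [E K]; apply/IH => //; split; first by lia.
    by move=> k; have := K k.+1; rewrite take_cons c10 c00; lia.
Qed.

Lemma dyck_iff u : dyck u <-> star \notin u /\ ht 0 u = Some 0.
Proof.
rewrite /dyck all_nstar; split.
- move=> [nu [E K]]; split => //; apply/(ht_dyck 0 0 nu); split => //; lia.
- move=> [nu H]; have [E K] := (ht_dyck 0 0 nu).1 H; split => //; split => //; lia.
Qed.

Lemma join_valid us : (forall u, u \in us -> dyck u) -> ht 0 (join_star us) = Some 0.
Proof.
elim: us => [|u us IH] //= H.
have [nu Vu] := (dyck_iff u).1 (H u (mem_head _ _)).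
case: us IH H => [|u' us'] IH H; first exact: Vu.
rewrite ht_cat Vu /=; apply: IH => v vin; apply: H; by rewrite in_cons vin orbT.
Qed.

Lemma join_ex C : ht 0 C = Some 0 ->
  exists us, [/\ us != [::], (forall u, u \in us -> dyck u) & C = join_star us].
Proof.
have [N] := ubnP (size C); elim: N C => // N IHN C SC V.
case: (boolP (star \in C)) => [HC|nC].
- have [a [r [E na]]] := split_star HC.
  move: V; rewrite E ht_cat; case Ha: (ht 0 a) => [[|k]|] //= Vr.
  have Sr : size r < N by move: SC; rewrite E size_cat /=; lia.
  have [us [ne Dus Er]] := IHN r Sr Vr.
  exists (a :: us); split => //.
  + move=> u; rewrite in_cons => /orP [/eqP -> | /Dus //]; exact/dyck_iff.
  + by rewrite Er; case: (us) ne.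
- exists [:: C]; split => // u; rewrite inE => /eqP ->; exact/dyck_iff.
Qed.

Lemma GK_iff n C : GK_chain n C <-> size C = n /\ ht 0 C = Some 0.
Proof.
rewrite /GK_chain; split.
- by move=> [S [us [_ [D E]]]]; split => //; rewrite E; exact: join_valid.
- by move=> [S V]; split => //; have [us [ne D E]] := join_ex V; exists us.
Qed.

Lemma uniq_flat (T S : eqType) (F : T -> seq S) (s : seq T) :
  uniq s -> (forall x, x \in s -> uniq (F x)) ->
  (forall x y z, x \in s -> y \in s -> z \in F x -> z \in F y -> x = y) ->
  uniq (flatten (map F s)).
Proof.
elim: s => //= x s IH /andP [nx us] HF HD.
rewrite cat_uniq HF ?mem_head //= IH //; last first.
- by move=> a b z ha hb; apply: HD; rewrite in_cons ?ha ?hb orbT.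
- by move=> a ha; apply: HF; rewrite in_cons ha orbT.
rewrite andbT; apply/hasPn => z /flattenP [l /mapP [y ys ->] zy]; apply/negP => zx.
have hy : y \in x :: s by rewrite in_cons ys orbT.
have E := HD x y z (mem_head _ _) hy zx zy.
by move: nx; rewrite E ys.
Qed.

Lemma mem_rho n C D : (D \in rho n C) = (D \in lam n C).
Proof. by rewrite /rho; case: ifP => _ //; rewrite mem_rev. Qed.
Lemma uniq_rho n C : uniq (rho n C) = uniq (lam n C).
Proof. by rewrite /rho; case: ifP => _ //; rewrite rev_uniq. Qed.

Definition Pn n := uniq (Lambda n) /\ (forall C, C \in Lambda n <-> (size C = n /\ ht 0 C = Some 0)).

Lemma P0 : Pn 0.
Proof.
split => // C; rewrite inE; split; first by move/eqP ->.
by case=> /size0nil -> _.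
Qed.

Lemma P1 : Pn 1.
Proof.
split => // C; rewrite inE; split; first by move/eqP ->.
case: C => [|x [|y C]] [S V] //; case: x S V => [[]|] //.
Qed.

Lemma Pstep n : Pn n -> Pn n.+2.
Proof.
move=> [Un Hn]; have Pm : forall C, C \in Lambda n -> odd (len C) = odd n.
  by move=> C /Hn [S V]; rewrite parity // S.
split.
- apply: uniq_flat => //.
  + by move=> C HC; rewrite uniq_rho; apply: U (Pm _ HC); case/Hn: HC.
  + move=> x y z hx hy; rewrite !mem_rho => zx zy.
    have [_ _ <-] := S (proj2 ((Hn x).1 hx)) (Pm _ hx) zx.
    by have [_ _ <-] := S (proj2 ((Hn y).1 hy)) (Pm _ hy) zy.
- move=> D /=; split.
  + move/flattenP => [l /mapP [C hC ->]]; rewrite mem_rho => hD.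
    have [V S' _] := S (proj2 ((Hn C).1 hC)) (Pm _ hC) hD.
    by rewrite S' (proj1 ((Hn C).1 hC)).
  + move=> [S' V]; have [C [VC SC hD]] := Ex V S'.
    apply/flattenP; exists (rho n C); first by apply: map_f; apply/Hn.
    by rewrite mem_rho.
Qed.

Lemma Pall n : Pn n.
Proof.
suff : Pn n /\ Pn n.+1 by case.
elim: n => [|n [IH1 IH2]]; first by split; [exact: P0 | exact: P1].
by split => //; exact: Pstep.
Qed.

Theorem lemma17 (n : nat) : 1 <= n ->
  uniq (Lambda n) /\ (forall C : chain, C \in Lambda n <-> GK_chain n C).
Proof.
move=> _; have [U' H] := Pall n; split => // C.
by rewrite H GK_iff.
Qed.
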